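(* Let $\mathfrak{g}$ be a Leibniz algebra with finite-dimensional Schur $\mathrm{Lie}$-multiplier and let $0\to\mathfrak{m}\to\mathfrak{g}^{*}\xrightarrow{\psi}\mathfrak{g}\to0$ be a $\mathrm{Lie}$-stem cover. Then $Z^{*}_{\mathrm{Lie}}(\mathfrak{g})=\psi\big(Z_{\mathrm{Lie}}(\mathfrak{g}^{*})\big)$.
   Context: Fix a field $\mathbb{K}$ with $\frac12\in\mathbb{K}$. A Leibniz algebra is a $\mathbb{K}$-vector space with a bilinear bracket satisfying $[x,[y,z]]=[[x,y],z]-[[x,z],y]$. $\mathfrak{p}^{\mathrm{ann}}$ is the span of all $[x,x]$, $\mathfrak{p}_{\mathrm{Lie}}=\mathfrak{p}/\mathfrak{p}^{\mathrm{ann}}$. $[\mathfrak{m},\mathfrak{n}]_{\mathrm{Lie}}$ is the span of all $[m,n]+[n,m]$. $Z_{\mathrm{Lie}}(\mathfrak{p})=\{z:[x,z]+[z,x]=0\ \forall x\in\mathfrak{p}\}$. A surjective homomorphism $f:\mathfrak{h}\to\mathfrak{g}$ is a $\mathrm{Lie}$-central extension if $\ker f\subseteq Z_{\mathrm{Lie}}(\mathfrak{h})$. The precise $\mathrm{Lie}$-center $Z^{*}_{\mathrm{Lie}}(\mathfrak{g})$ is the intersection of all $f(Z_{\mathrm{Lie}}(\mathfrak{h}))$ over all $\mathrm{Lie}$-central extensions $f:\mathfrak{h}\twoheadrightarrow\mathfrak{g}$. For a free presentation $0\to\mathfrak{r}\to\mathfrak{f}\to\mathfrak{g}\to0$ ($\mathfrak{f}$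 free Leibniz), $\mathcal{M}^{\mathrm{Lie}}(\mathfrak{g})=\frac{\mathfrak{r}\cap[\mathfrak{f},\mathfrak{f}]_{\mathrm{Lie}}}{[\mathfrak{f},\mathfrak{r}]_{\mathrm{Lie}}}$. An extension $0\to\mathfrak{m}\to\mathfrak{p}\to\mathfrak{g}\to0$ is a $\mathrm{Lie}$-stem cover if $\mathfrak{m}\subseteq Z_{\mathrm{Lie}}(\mathfrak{p})$, the induced map $\mathfrak{p}_{\mathrm{Lie}}\to\mathfrak{g}_{\mathrm{Lie}}$ is an isomorphism, and the induced map $\mathcal{M}^{\mathrm{Lie}}(\mathfrak{p})\to\mathcal{M}^{\mathrm{Lie}}(\mathfrak{g})$ is zero. *)

(* Defs.v *)
From HB Require Import structures.
From mathcomp Require Import all_boot all_order all_algebra.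
Set Implicit Arguments. Unset Strict Implicit. Unset Printing Implicit Defensive.
Import GRing.Theory.
Local Open Scope ring_scope.

Record leibnizAlg (K : fieldType) := LeibnizAlg {
  lcar :> lmodType K;
  lbr : lcar -> lcar -> lcar;
  lbr_linl : forall (a : K) (x y z : lcar),
      lbr (a *: x + y) z = a *: lbr x z + lbr y z;
  lbr_linr : forall (a : K) (x y z : lcar),
      lbr z (a *: x + y) = a *: lbr z x + lbr z y;
  lbr_leibniz : forall x y z : lcar,
      lbr x (lbr y z) = lbr (lbr x y) z - lbr (lbr x z) y
}.
Arguments lbr {K} l _ _.

Section LeibnizDefs.
Variable K : fieldType.

Definition is_subspace (A : leibnizAlg K) (W : A -> Prop) : Prop :=
  W 0 /\ forall (a : K) (x y : A), W x -> W y -> W (a *: x + y).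

Definition span (A : leibnizAlg K) (S : A -> Prop) : A -> Prop :=
  fun v => forall W : A -> Prop, is_subspace W -> (forall s, S s -> W s) -> W v.

Definition lie_bracket_span (A : leibnizAlg K) (M N : A -> Prop) : A -> Prop :=
  span (fun v => exists m n, M m /\ N n /\ v = lbr A m n + lbr A n m).

Definition ann (A : leibnizAlg K) : A -> Prop :=
  span (fun v => exists x : A, v = lbr A x x).

Definition ZLie (A : leibnizAlg K) : A -> Prop :=
  fun z => forall x : A, lbr A x z + lbr A z x = 0.

Definition allA (A : leibnizAlg K) : A -> Prop := fun _ => True.

Definition is_hom (A B : leibnizAlg K) (f : A -> B) : Prop :=
  (forall (a : K) (x y : A), f (a *: x + y) = a *: f x + f y) /\
  (forall x y : A, f (lbr A x y) = lbr B (f x) (f y)).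

Definition kernel (A B : leibnizAlg K) (f : A -> B) : A -> Prop :=
  fun x => f x = 0.

Definition surj (A B : leibnizAlg K) (f : A -> B) : Prop :=
  forall y : B, exists x : A, f x = y.

Definition is_free_on (X : Type) (F : leibnizAlg K) (i : X -> F) : Prop :=
  forall (H : leibnizAlg K) (h : X -> H),
    (exists phi : F -> H, is_hom phi /\ forall x, phi (i x) = h x) /\
    (forall phi1 phi2 : F -> H, is_hom phi1 -> is_hom phi2 ->
       (forall x, phi1 (i x) = h x) -> (forall x, phi2 (i x) = h x) ->
       forall v, phi1 v = phi2 v).

Definition is_free (F : leibnizAlg K) : Prop :=
  exists (X : Type) (i : X -> F), is_free_on i.

Definition free_presentation (F g : leibnizAlg K) (rho : F -> g) : Prop :=
  is_free F /\ is_hom rho /\ surj rho.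

(* The quotient B' / C (with C a subspace) is finite dimensional, where
   B' is a subset: there is a finite family s with B' contained in span s + C. *)
Definition fin_dim_quot (A : leibnizAlg K) (B C : A -> Prop) : Prop :=
  exists s : seq A, forall v, B v ->
    exists w u, span (fun x => x \in s) w /\ C u /\ v = w + u.

(* M^Lie(g) = (r cap [F,F]_Lie) / [F,r]_Lie computed from the presentation *)
Definition multiplier_num (F g : leibnizAlg K) (rho : F -> g) : F -> Prop :=
  fun v => kernel rho v /\ lie_bracket_span (@allA F) (@allA F) v.
Definition multiplier_den (F g : leibnizAlg K) (rho : F -> g) : F -> Prop :=
  lie_bracket_span (@allA F) (kernel rho).

Definition fin_dim_Lie_multiplier (g : leibnizAlg K) : Prop :=
  exists (F : leibnizAlg K) (rho : F -> g), free_presentation rho /\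
    fin_dim_quot (multiplier_num rho) (multiplier_den rho).

Definition lie_central_ext (h g : leibnizAlg K) (f : h -> g) : Prop :=
  is_hom f /\ surj f /\ (forall x, kernel f x -> ZLie x).

Definition precise_Lie_center (g : leibnizAlg K) : g -> Prop :=
  fun y => forall (h : leibnizAlg K) (f : h -> g), lie_central_ext f ->
    exists z, ZLie z /\ f z = y.

(* The map M^Lie(p) -> M^Lie(g) induced by psi : p -> g, computed via free
   presentations (F,pi) of p and (f,rho) of g and a lift beta : F -> f with
   rho o beta = psi o pi, is zero. *)
Definition induced_multiplier_map_zero (p g : leibnizAlg K) (psi : p -> g) : Prop :=
  exists (F : leibnizAlg K) (pi : F -> p) (f : leibnizAlg K) (rho : f -> g),
    free_presentation pi /\ free_presentation rho /\
    forall beta : F -> f, is_hom beta -> (forall x, rho (beta x) = psi (pi x)) ->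
      forall v, multiplier_num pi v -> multiplier_den rho (beta v).

Definition lie_stem_cover (p g : leibnizAlg K) (psi : p -> g) : Prop :=
  is_hom psi /\ surj psi /\
      (forall x, kernel psi x -> ZLie x) /\
      (* induced p/p^ann -> g/g^ann is injective ... *)
      (forall x : p, ann (psi x) -> ann x) /\
      (* ... and surjective, i.e. an isomorphism *)
      (forall y : g, exists x : p, ann (psi x - y)) /\
    induced_multiplier_map_zero psi.

End LeibnizDefs.

(* Main.v *)
Require Import Defs.
From mathcomp Require Import all_boot all_order all_algebra.
From Stdlib Require Import IndefiniteDescription.
Local Open Scope ring_scope.
Import GRing.Theory.
Set Implicit Arguments. Unset Strict Implicit.

Section Aux.
Variable K : fieldType.

Lemma hom0 (A B : leibnizAlg K) (f : A -> B) : is_hom f -> f 0 = 0.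
Proof.
move=> [L _]; have E := L 1 0 0; rewrite !scale1r !addr0 in E.
by apply/(addrI (f 0)); rewrite addr0 -E.
Qed.

Lemma homD (A B : leibnizAlg K) (f : A -> B) x y : is_hom f -> f (x + y) = f x + f y.
Proof. by move=> [L _]; have := L 1 x y; rewrite !scale1r. Qed.

Lemma homN (A B : leibnizAlg K) (f : A -> B) x : is_hom f -> f (- x) = - f x.
Proof.
move=> H; have := (proj1 H) (-1) x 0.
by rewrite (hom0 H) !scaleN1r !addr0.
Qed.

Lemma homB (A B : leibnizAlg K) (f : A -> B) x y : is_hom f -> f (x - y) = f x - f y.
Proof. by move=> H; rewrite homD // homN. Qed.

Lemma hom_comp (A B C : leibnizAlg K) (f : A -> B) (g : B -> C) :
  is_hom f -> is_hom g -> is_hom (fun x => g (f x)).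
Proof.
move=> [f1 f2] [g1 g2]; split=> [a x y|x y]; first by rewrite f1 g1.
by rewrite f2 g2.
Qed.

Lemma lbrDl (A : leibnizAlg K) (x y z : A) : lbr A (x + y) z = lbr A x z + lbr A y z.
Proof. by have := lbr_linl 1 x y z; rewrite !scale1r. Qed.

Lemma lbrDr (A : leibnizAlg K) (x y z : A) : lbr A z (x + y) = lbr A z x + lbr A z y.
Proof. by have := lbr_linr 1 x y z; rewrite !scale1r. Qed.

Lemma lift_free (F A B : leibnizAlg K) (r : F -> A) (f : B -> A) :
  is_free F -> is_hom r -> is_hom f -> surj f ->
  exists g : F -> B, is_hom g /\ forall v, f (g v) = r v.
Proof.
move=> [X [i Fi]] hr hf sf.
have ch : forall x : X, {b : B | f b = r (i x)}.
  by move=> x; apply: constructive_indefinite_description; apply: sf.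
pose h := fun x => sval (ch x).
have [[phi [hphi ephi]] U] := Fi B h.
exists phi; split => //.
have [_ U2] := Fi A (fun x => r (i x)).
apply: (U2 (fun v => f (phi v)) r) => //.
- exact: hom_comp.
- by move=> x; rewrite ephi /h; case: (ch x).
Qed.

Lemma kill_den (f' g h : leibnizAlg K) (rho : f' -> g) (f : h -> g) (d : f' -> h) :
  is_hom d -> (forall x, kernel f x -> ZLie x) -> (forall v, f (d v) = rho v) ->
  forall v, multiplier_den rho v -> d v = 0.
Proof.
move=> hd cf fd v Hv; apply: (Hv (fun v => d v = 0)).
  split; first exact: hom0.
  by move=> a x y /= Hx Hy; rewrite (proj1 hd) Hx Hy scaler0 addr0.
move=> s [m [n [_ [kn ->]]]].
rewrite homD // !(proj2 hd).
have : ZLie (d n) by apply: cf; rewrite /kernel fd.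
by move=> Z; apply: Z.
Qed.

End Aux.

Theorem mainTheorem19 (K : fieldType) (two_unit : (2%:R : K) != 0)
  (g gstar : leibnizAlg K) (psi : gstar -> g) :
  fin_dim_Lie_multiplier g ->
  lie_stem_cover psi ->
  forall y : g, precise_Lie_center y <-> exists z : gstar, ZLie z /\ psi z = y.
Proof.
move=> _ [hpsi [spsi [cpsi [_ [_ [F [pi [f' [rho [[frF [hpi spi]] [[frf [hrho srho]] M]]]]]]]]]]] y.
split.
  by move=> P; apply: P; split.
move=> [z [Zz <-]] h f [hf [sf cf]].
have [u eu] := spi z.
have [beta [hb eb]] := lift_free frF (hom_comp hpi hpsi) hrho srho.
have [d [hd ed]] := lift_free frf hrho hf sf.
exists (d (beta u)); split; last by rewrite ed eb eu.
move=> x.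
have [v ev] : exists v, psi (pi v) = f x.
  have [a ea] := spsi (f x); have [v ev] := spi a; by exists v; rewrite ev.
set x' := d (beta v).
have Zd : ZLie (x - x').
  by apply: cf; rewrite /kernel homB // /x' ed eb ev subrr.
have -> : x = x' + (x - x') by rewrite addrC subrK.
rewrite lbrDl lbrDr addrACA.
have -> : lbr h x' (d (beta u)) + lbr h (d (beta u)) x' =
          d (beta (lbr F v u + lbr F u v)).
  by rewrite /x' (homD _ _ hb) (homD _ _ hd) !(proj2 hb) !(proj2 hd).
rewrite (kill_den hd cf ed (M beta hb eb _ _)) ?add0r.
  by rewrite addrC; apply: Zd.
split.
  by rewrite /kernel (homD _ _ hpi) !(proj2 hpi) eu; apply: Zz.
by move=> W _ HW; apply: HW; exists v, u.
Qed.
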